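(* Let $R$ be a commutative ring with nonzero identity and $\delta$ an expansion of ideals of $R$. Then $\sqrt{0}$ is a $\delta$-$n$-ideal of $R$ if and only if every zero-divisor of the quotient ring $R/\sqrt{0}$ is $\delta_q$-nilpotent.
   Context: An expansion of ideals of a ring $R$ is a map $\delta$ from the set of ideals of $R$ to itself such that $I\subseteq\delta(I)$ for every ideal $I$, and $\delta(I)\subseteq\delta(J)$ whenever $I\subseteq J$. $\sqrt{0}$ denotes the nilradical of $R$. Given an expansion $\delta$, a proper ideal $I$ of $R$ is a $\delta$-$n$-ideal if whenever $a,b\in R$ with $ab\in I$ and $a\notin\sqrt{0}$, then $b\in\delta(I)$. The expansion $\delta_q$ of ideals of $R/\sqrt{0}$ is defined by $\delta_q(J/\sqrt{0})=\delta(J)/\sqrt{0}$ for ideals $J\supseteq\sqrt{0}$ of $R$. An element $x$ of $R/\sqrt{0}$ is $\delta_q$-nilpotent if $x\in\delta_q(0_{R/\sqrt{0}})$. A zero-divisor $\bar a$ of $R/\sqrt{0}$ is an element with $\bar a\bar b=0$ for some nonzero $\bar b\in R/\sqrt{0}$. *)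

(* Defs.v *)
From HB Require Import structures.
From mathcomp Require Import all_boot all_order all_algebra.
Set Implicit Arguments. Unset Strict Implicit. Unset Printing Implicit Defensive.
Import GRing.Theory.
Local Open Scope ring_scope.

Definition is_ideal (R : comNzRingType) (I : R -> Prop) : Prop :=
  [/\ I 0, (forall x y, I x -> I y -> I (x + y)) & (forall r x, I x -> I (r * x))].

Definition proper_ideal (R : comNzRingType) (I : R -> Prop) : Prop :=
  is_ideal I /\ ~ I 1.

Definition subideal (R : comNzRingType) (I J : R -> Prop) : Prop :=
  forall x, I x -> J x.

Definition expansion (R : comNzRingType) (delta : (R -> Prop) -> (R -> Prop)) : Prop :=
  [/\ (forall I, is_ideal I -> is_ideal (delta I)),
      (forall I, is_ideal I -> subideal I (delta I)) &
      (forall I J, is_ideal I -> is_ideal J -> subideal I J ->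
                   subideal (delta I) (delta J))].

Definition nilrad (R : comNzRingType) : R -> Prop :=
  fun x => exists n : nat, x ^+ n = 0.

Definition delta_n_ideal (R : comNzRingType) (delta : (R -> Prop) -> (R -> Prop))
  (I : R -> Prop) : Prop :=
  proper_ideal I /\
  forall a b : R, I (a * b) -> ~ nilrad a -> delta I b.

(* Given a presentation pi : R ->> S of the quotient ring R/sqrt(0),
   delta_q (J) = pi (delta (pi^-1 J)), i.e. delta_q(J'/sqrt0) = delta(J')/sqrt0. *)
Definition delta_q (R S : comNzRingType) (pi : R -> S)
  (delta : (R -> Prop) -> (R -> Prop)) (J : S -> Prop) : S -> Prop :=
  fun y => exists x, delta (fun r => J (pi r)) x /\ pi x = y.

Definition zero_divisor (S : comNzRingType) (a : S) : Prop :=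
  exists b : S, b != 0 /\ a * b = 0.

Definition delta_q_nilpotent (R S : comNzRingType) (pi : R -> S)
  (delta : (R -> Prop) -> (R -> Prop)) (x : S) : Prop :=
  delta_q pi delta (fun y => y = 0) x.

(* Main.v *)
Require Import Defs.
From HB Require Import structures.
From mathcomp Require Import all_boot all_order all_algebra.
Local Open Scope ring_scope.
Import GRing.Theory.

Theorem proposition2p15 (R : comNzRingType) (delta : (R -> Prop) -> (R -> Prop))
  (S : comNzRingType) (pi : {rmorphism R -> S}) :
  expansion delta ->
  (forall y : S, exists x : R, pi x = y) ->
  (forall x : R, pi x = 0 <-> nilrad x) ->
  (delta_n_ideal delta (@nilrad R) <->
   forall a : S, zero_divisor a -> delta_q_nilpotent pi delta a).
Proof.
move=> [dI dE dM] surj ker.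
set K := fun r : R => pi r = 0.
have idK : is_ideal K.
  split; rewrite /K.
  - by rewrite rmorph0.
  - by move=> x y hx hy; rewrite rmorphD hx hy addr0.
  - by move=> r x hx; rewrite rmorphM hx mulr0.
have KN : subideal K (@nilrad R) by move=> x /ker.
have NK : subideal (@nilrad R) K by move=> x /ker.
have idN : is_ideal (@nilrad R).
  case: idK => [h0 hD hM]; split.
  - exact: KN.
  - by move=> x y /NK hx /NK hy; apply: KN; apply: hD.
  - by move=> r x /NK hx; apply: KN; apply: hM.
have dKN := dM _ _ idK idN KN.
have dNK := dM _ _ idN idK NK.
split.
- move=> [_ H] a [b [bn0 ab0]].
  have [x px] := surj a; have [y py] := surj b.
  exists x; split; last by [].
  apply: dNK; apply: (H y x).
    by apply/ker; rewrite rmorphM px py mulrC.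
  by move=> /ker; rewrite py => b0; rewrite b0 eqxx in bn0.
- move=> H; split.
    split; first exact: idN.
    by move=> /ker; rewrite rmorph1 => /eqP; rewrite oner_eq0.
  move=> a b hab ha.
  have zd : zero_divisor (pi b).
    exists (pi a); split.
      by apply/eqP => /ker.
    by rewrite -rmorphM mulrC; apply/ker.
  have [x [dx px]] := H _ zd.
  apply: dKN.
  have -> : b = x + (b - x) by rewrite addrC subrK.
  case: (dI _ idK) => _ hD _; apply: hD; first exact: dx.
  apply: (dE _ idK); rewrite /K rmorphB px; exact: subrr.
Qed.
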